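(* Let $k_1=2$ and $k_{i+1}=\big(\prod_{j\le i}k_j\big)+1$ (the Sylvester sequence), let $c$ be a positive integer and $\epsilon:=1/\prod_{\ell=1}^c k_\ell$. Define $\vec s\in[0,1]^{c+1}$ by $s_i=\frac{1}{k_i}(1-\frac{\epsilon}{2})$ for $i\in[c]$ and $s_{c+1}=\epsilon(\frac32-\frac{\epsilon}{2})$. Let $\vec\chi\in\mathbb{N}^{c+1}$ satisfy $\vec\chi\cdot\vec s\le 1$. Then: (a) if $\chi_{c+1}=1$ and $\vec\chi\ne\vec 1$, then $\vec\chi\cdot\vec s\le 1-\epsilon/2$; (b) if $\chi_{c+1}=0$, then $\vec\chi\cdot\vec s\le 1-\epsilon/2$; (c) if $\chi_{c+1}=0$ and $\vec\chi\ne k_i\vec e_i$ for every $i\in[c]$, then $\vec\chi\cdot\vec s\le 1-\epsilon$.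
   Context: $\vec 1$ denotes the all-ones vector in $\mathbb{R}^{c+1}$ and $\vec e_i$ the $i$-th standard basis vector. $\vec\chi$ is interpreted as the characteristic vector of a feasibly packed unit bin ($\chi_i$ = number of items of size $s_i$ in it). *)

(* Defs.v *)
From mathcomp Require Import all_boot all_order all_algebra.
Set Implicit Arguments. Unset Strict Implicit. Unset Printing Implicit Defensive.
Import Order.TTheory GRing.Theory Num.Theory.

(* Sylvester sequence, 0-indexed: sylv i = k_{i+1} of the paper.
   sylv 0 = 2, sylv (n+1) = (\prod_{j <= n} sylv j) + 1. *)
Fixpoint sylv_aux (n : nat) : nat * nat :=
  (* returns (sylv n, \prod_{j < n} sylv j) *)
  match n with
  | 0 => (2, 1)
  | n'.+1 => let (k, p) := sylv_aux n' in ((p * k).+1, p * k)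
  end.
Definition sylv (n : nat) : nat := (sylv_aux n).1.

Local Open Scope ring_scope.

Definition eps (c : nat) : rat := ((\prod_(l < c) sylv l)%N%:R)^-1.

(* size vector s in Q^{c+1}; index i : 'I_c.+1 with i < c is item i+1 of the
   paper, index c (ord_max) is item c+1. *)
Definition svec (c : nat) (i : 'I_c.+1) : rat :=
  if (i < c)%N then ((sylv i)%:R)^-1 * (1 - eps c / 2)
  else eps c * (3 / 2 - eps c / 2).

Arguments svec : clear implicits.
Definition dots (c : nat) (chi : 'I_c.+1 -> nat) : rat :=
  \sum_(i < c.+1) (chi i)%:R * svec c i.
Arguments dots : clear implicits.
Example sylv_test : [:: sylv 0; sylv 1; sylv 2; sylv 3] = [:: 2; 3; 7; 43]%N.
Proof. by []. Qed.

(* Main.v *)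
Require Import Defs.
From mathcomp Require Import all_boot all_order all_algebra.
From mathcomp Require Import zify ring lra.
Import Order.TTheory GRing.Theory Num.Theory.
Local Open Scope ring_scope.

Definition pp n := (\prod_(l < n) sylv l)%N.
Fixpoint Nf (f : nat -> nat) n : nat :=
  match n with 0 => 0%N | n.+1 => (sylv n * Nf f n + pp n * f n)%N end.

Lemma ppS n : pp n.+1 = (pp n * sylv n)%N.
Proof. by rewrite /pp big_ord_recr. Qed.

Lemma sylv_auxE n : sylv_aux n = ((pp n).+1, pp n).
Proof.
elim: n => [|n IH]; first by rewrite /pp big_ord0.
rewrite /= IH ppS /sylv IH /=. by [].
Qed.

Lemma sylvE n : sylv n = (pp n).+1.
Proof. by rewrite /sylv sylv_auxE. Qed.

Lemma pp_pos n : (0 < pp n)%N.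
Proof. elim: n => [|n IH]; first by rewrite /pp big_ord0. rewrite ppS sylvE. nia. Qed.

Lemma lemA n f : (Nf f n + 1 = pp n)%N -> forall i, (i < n)%N -> f i = 1%N.
Proof.
elim: n => [|n IH] /=; first by [].
rewrite ppS sylvE => H.
have hQ := pp_pos n.
set Q := pp n in H hQ. set N := Nf f n in H IH. set x := f n in H.
have [hx hN] : x = 1%N /\ (N + 1 = Q)%N.
  have : (x <= Q)%N by nia.
  case: (ltngtP (N + x) Q) => h1 h2; nia.
move=> i; rewrite ltnS leq_eqVlt => /orP [/eqP -> //|]; exact: IH.
Qed.

Lemma lemZ n f : Nf f n = 0%N -> forall j, (j < n)%N -> f j = 0%N.
Proof.
elim: n => [|n IH] //= H j; rewrite sylvE in H.
have hQ := pp_pos n.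
have h1 : Nf f n = 0%N by nia.
have h2 : f n = 0%N by nia.
rewrite ltnS leq_eqVlt => /orP [/eqP -> //|]; exact: IH.
Qed.

Lemma lemC n f : (0 < n)%N -> Nf f n = pp n ->
  exists i, [/\ (i < n)%N, f i = sylv i & forall j, (j < n)%N -> j != i -> f j = 0%N].
Proof.
elim: n => [|n IH] //= _.
rewrite ppS sylvE => H.
have hQ := pp_pos n.
set Q := pp n in H hQ IH. set N := Nf f n in H IH. set x := f n in H.
have : (x <= Q.+1)%N by nia.
rewrite leq_eqVlt => /orP [/eqP hx|].
  have hN : N = 0%N by nia.
  exists n; split => //; first by rewrite sylvE.
  move=> j; rewrite ltnS leq_eqVlt => /orP [/eqP -> |]; first by rewrite eqxx.
  move=> hj _; exact: lemZ hN _ hj.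
rewrite ltnS leq_eqVlt => /orP [/eqP hx|hx].
  case: (ltngtP (N + x) Q) => h1; nia.
have hx0 : x = 0%N.
  case: (ltngtP (N + x) Q) => h1; nia.
have hN : N = Q by nia.
have hN' : Nf f n = pp n by exact: hN.
have [n0|npos] := posnP n.
  by move: hN'; rewrite n0 /= /pp big_ord0.
case: (IH npos hN') => i [hi h1 h2].
exists i; split => //; first by apply: ltnW.
move=> j; rewrite ltnS leq_eqVlt => /orP [/eqP -> |hj]; first by [].
exact: h2.
Qed.

Lemma Ssum n f : (Nf f n)%:R = (pp n)%:R * \sum_(i<n) (f i)%:R / (sylv i)%:R :> rat.
Proof.
elim: n => [|n IH]; first by rewrite big_ord0 mulr0.
rewrite big_ord_recr /= ppS natrD !natrM IH.
have : (sylv n)%:R != 0 :> rat by rewrite pnatr_eq0 sylvE.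
move=> h. field. exact: h.
Qed.
Lemma key c (chi : 'I_c.+1 -> nat) :
  let P := pp c in let N := Nf (fun i => chi (inord i)) c in let x := chi ord_max in
  (2 * P ^ 2)%:R * dots c chi + (N + x)%:R = (2 * N * P + 3 * x * P)%:R :> rat.
Proof.
move=> P N x.
have hP : (P%:R : rat) != 0 by rewrite pnatr_eq0 -lt0n pp_pos.
have hS := Ssum c (fun i => chi (inord i)).
have he : eps c = (P%:R)^-1 by [].
rewrite /dots big_ord_recr /=.
have -> : \sum_(i < c) (chi (widen_ord (leqnSn c) i))%:R * svec c (widen_ord (leqnSn c) i)
   = (\sum_(i < c) (chi (inord i))%:R / (sylv i)%:R) * (1 - eps c / 2).
  rewrite mulr_suml; apply: eq_bigr => i _.
  have -> : widen_ord (leqnSn c) i = inord i.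
    by apply: val_inj; rewrite /= inordK // ltnW // ltnS.
  have hi : (i < c.+1)%N by exact: ltnW (ltn_ord i).
  by rewrite /svec /= inordK // ltn_ord mulrA.
rewrite /svec /= ltnn.
rewrite he.
move: hS; rewrite -/N -/P => hS.
set S := \sum_(i < c) _ in hS *.
have -> : S = N%:R / P%:R by rewrite /N hS mulrAC divff // mul1r.
rewrite !natrD !natrM ?natrX.
field. exact: hP.
Qed.
Lemma tr (d : rat) (a b P k : nat) : (0 < P)%N -> (2*P^2)%:R * d + a%:R = b%:R ->
 (d <= 1 - k%:R * (P%:R)^-1 / 2) = (b + k*P <= 2*P^2 + a)%N.
Proof.
move=> hP H.
have hP' : (P%:R : rat) != 0 by rewrite pnatr_eq0 -lt0n.
rewrite -(ler_pM2l (_ : 0 < (2*P^2)%:R :> rat)); last by rewrite ltr0n; nia.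
have -> : (2*P^2)%:R * (1 - k%:R * P%:R^-1/2) = (2*P^2)%:R - (k*P)%:R :> rat.
  rewrite !natrM ?natrX. field. exact: hP'.
rewrite (_ : (2*P^2)%:R * d = b%:R - a%:R); last by rewrite -H addrK.
rewrite -(ler_nat rat) !natrD.
by apply/idP/idP => h; lra.
Qed.

Lemma pp2 c : (0 < c)%N -> (2 <= pp c)%N.
Proof. case: c => // c' _; rewrite ppS sylvE; have := pp_pos c'; nia. Qed.

Theorem lemmaD2 (c : nat) (hc : (0 < c)%N) (chi : 'I_c.+1 -> nat)
  (hfeas : dots c chi <= 1) :
  ((chi ord_max = 1%N /\ (exists i, chi i <> 1%N)) -> dots c chi <= 1 - eps c / 2)
  /\ (chi ord_max = 0%N -> dots c chi <= 1 - eps c / 2)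
  /\ ((chi ord_max = 0%N /\
       (forall i : 'I_c.+1, (i < c)%N ->
          exists j, chi j <> (if j == i then sylv i else 0%N)))
      -> dots c chi <= 1 - eps c).
Proof.
have K := @key c chi.
move: K; set P := pp c; set N := Nf _ c; set x := chi ord_max => K.
have hP2 : (2 <= P)%N by exact: pp2.
have hP0 : (0 < P)%N by lia.
have he : eps c = (P%:R)^-1 by [].
have E1 : 1 - eps c / 2 = 1 - 1%:R * (P%:R)^-1 / 2 :> rat by rewrite he mul1r.
have E2 : 1 - eps c = 1 - 2%:R * (P%:R)^-1 / 2 :> rat by rewrite he mulrAC divff // mul1r.
have E0 : 1 = 1 - 0%:R * (P%:R)^-1 / 2 :> rat by rewrite mul0r mul0r subr0.
have F : (2 * N * P + 3 * x * P + 0 * P <= 2 * P ^ 2 + (N + x))%N.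
  by rewrite -(tr _ _ _ _ 0 hP0 K) -E0.
rewrite E1 E2 !(tr _ _ _ _ _ hP0 K).
have hb : x = 0%N -> (N <= P)%N.
  move=> h0; rewrite h0 in F; nia.
split; last split.
- move=> [hx [i hi]]; rewrite hx in F *.
  have : (N <= P.-1)%N by nia.
  rewrite leq_eqVlt => /orP [/eqP hN|hN]; last nia.
  exfalso; apply: hi.
  have hA := @lemA c (fun i => chi (inord i)).
  have := hA ltac:(rewrite -/N hN; lia).
  have [->|] := eqVneq i ord_max; first by [].
  move=> hne hall.
  have hic : (i < c)%N.
    have := ltn_ord i; rewrite ltnS leq_eqVlt => /orP [/eqP h|//].
    by case/eqP: hne; apply: val_inj.
  have := hall i hic; rewrite (_ : inord i = i) //.
  by apply: val_inj; rewrite /= inordK.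
- move=> hx; rewrite hx in F * => /=; have := hb hx; nia.
- move=> [hx hi]; rewrite hx in F *; have := hb hx.
  rewrite leq_eqVlt => /orP [/eqP hN|hN]; last nia.
  exfalso.
  have [i [hic h1 h2]] := @lemC c (fun i => chi (inord i)) hc hN.
  have hi' : (i < c.+1)%N by lia.
  have [j hj] := hi (Ordinal hi') hic.
  apply: hj.
  have [->|hne] := eqVneq j ord_max.
    rewrite -/x hx; case: eqP => // /(congr1 val) /= h; lia.
  have hjc : (j < c)%N.
    have := ltn_ord j; rewrite ltnS leq_eqVlt => /orP [/eqP h|//].
    by case/eqP: hne; apply: val_inj.
  have hjj : (inord j : 'I_c.+1) = j by apply: val_inj; rewrite /= inordK.
  case: eqP => [->|hne'].
    by move: h1; rewrite /= (_ : inord i = Ordinal hi') //; apply: val_inj; rewrite /= inordK.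
  rewrite -hjj; apply: h2 => //.
  apply/eqP => h; apply: hne'; apply: val_inj; exact: h.
Qed.
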